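(* Let $p,q\ge2$ be coprime, $\widetilde\Gamma=\langle\alpha,\beta\mid\alpha^p=\beta^q\rangle$ with $c=\alpha^p$, and let $r\ge1$ be an integer coprime to both $p$ and $q$. Let $G_r$ be the subgroup generated by $\alpha_r=\alpha^r$ and $\beta_r=\beta^r$. Then $\alpha\mapsto\alpha_r$, $\beta\mapsto\beta_r$ defines an isomorphism $\widetilde\Gamma\to G_r$, so $G_r\cong\langle\alpha_r,\beta_r\mid\alpha_r^p=\beta_r^q\rangle$, and: (i) $Z(G_r)=\langle c^r\rangle\subseteq Z(\widetilde\Gamma)$; (ii) $G_r'=\widetilde\Gamma'$; (iii) $G_r/G_r'$ is generated by the image of $x_r=\alpha_r^{q_1}\beta_r^{p_1}$ (where $pp_1+qq_1=1$), and the normal closure of $x_r$ in $\widetilde\Gamma$ and in $G_r$ both equal $G_r$; (iv) $G_r$ is normal in $\widetilde\Gamma$ and $\widetilde\Gamma/G_r\cong H/H_r\cong Z(\widetilde\Gamma)/Z(G_r)\cong\mathbb Z_r$, where $H=\widetilde\Gamma/\widetilde\Gamma'$, $H_r=G_r/G_r'$; (v) the projection $\widetilde\Gamma\to\widetilde\Gamma/Z(\widetilde\Gamma)\cong\Gamma_{p,q}$ maps $G_r$ onto $\Gamma_{p,q}$.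
   Context: $Z(\cdot)$ denotes the center and $(\cdot)'$ the commutator subgroup. The center of $\widetilde\Gamma$ is $\langle c\rangle$, and $\widetilde\Gamma/\langle c\rangle\cong\Gamma_{p,q}=\langle\alpha_0,\beta_0\mid\alpha_0^p=\beta_0^q=1\rangle$ via $\alpha\mapsto\alpha_0$, $\beta\mapsto\beta_0$. *)

(* Defs.v *)
(* Possibly-infinite groups are not available in MathComp,
   so we introduce an elementary (Prop-based) notion of group, subgroups as
   predicates, and group presentations via their universal property. *)
From HB Require Import structures.
From mathcomp Require Import all_boot all_order all_algebra.
Set Implicit Arguments. Unset Strict Implicit. Unset Printing Implicit Defensive.
Import GRing.Theory Num.Theory.

Record group := Group {
  carrier :> Type;
  gmul : carrier -> carrier -> carrier;
  ginv : carrier -> carrier;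
  gone : carrier;
  gmulA : forall x y z, gmul x (gmul y z) = gmul (gmul x y) z;
  gmul1 : forall x, gmul gone x = x;
  gmulV : forall x, gmul (ginv x) x = gone
}.
Arguments gmul {g}. Arguments ginv {g}. Arguments gone {g}.

Section GroupDefs.
Variable G : group.
Implicit Types (x y : G) (S N A : G -> Prop).

Fixpoint gpown x (n : nat) : G :=
  match n with O => gone | S n => gmul x (gpown x n) end.
Definition gpowz x (k : int) : G :=
  match k with Posz n => gpown x n | Negz n => ginv (gpown x n.+1) end.

Definition gcomm x y : G := gmul (gmul (ginv x) (ginv y)) (gmul x y).
Definition gconj x y : G := gmul (gmul (ginv y) x) y.

Definition gsubset S N := forall x, S x -> N x.
Definition gsame_set S N := forall x, S x <-> N x.

Definition gsubgroup S :=
  [/\ S gone, (forall x y, S x -> S y -> S (gmul x y)) & (forall x, S x -> S (ginv x))].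

Definition ggen A : G -> Prop := fun x => forall S, gsubgroup S -> gsubset A S -> S x.

Definition gsetT : G -> Prop := fun _ => True.

Definition gcenter S : G -> Prop := fun x => S x /\ forall y, S y -> gmul x y = gmul y x.

Definition gderived S : G -> Prop :=
  ggen (fun z => exists x y, [/\ S x, S y & z = gcomm x y]).

Definition gnormal_closure S x : G -> Prop :=
  ggen (fun z => exists g, S g /\ z = gconj x g).

Definition gnormal N S :=
  [/\ gsubgroup N, gsubset N S & forall x g, N x -> S g -> N (gconj x g)].

(* S / N is isomorphic to K (first isomorphism theorem form):
   a homomorphism on S onto K whose kernel (inside S) is exactly N. *)
Definition quotient_iso S N (K : group) :=
  exists f : G -> K,
    [/\ (forall x y, S x -> S y -> f (gmul x y) = gmul (f x) (f y)),
        (forall k : K, exists x, S x /\ f x = k)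
      & (forall x, S x -> (f x = gone <-> N x))].

(* (S / M) / (image of N in S / M) is isomorphic to K:
   kernel = { x in S | x M = y M for some y in N }. *)
Definition quotient2_iso S M N (K : group) :=
  exists f : G -> K,
    [/\ (forall x y, S x -> S y -> f (gmul x y) = gmul (f x) (f y)),
        (forall k : K, exists x, S x /\ f x = k)
      & (forall x, S x -> (f x = gone <-> exists y, N y /\ M (gmul x (ginv y))))].

End GroupDefs.
Arguments gsetT G _ : clear implicits.

Definition is_hom (G K : group) (f : G -> K) := forall x y, f (gmul x y) = gmul (f x) (f y).

(* (T, a, b) is a presentation of < a, b | a^p = b^q > :
   the relation holds, a and b generate T, and T has the universal property. *)
Definition torus_presentation (p q : nat) (T : group) (a b : T) :=
  [/\ gpown a p = gpown b q,
      (forall x, ggen (fun z => z = a \/ z = b) x)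
    & (forall (K : group) (u v : K), gpown u p = gpown v q ->
         exists f : T -> K, [/\ is_hom f, f a = u & f b = v])].

(* the cyclic group Z_r = Z / rZ (for r >= 1), carrier 'I_r *)
Definition Zr_group (r : nat) : group :=
  @Group 'I_(r.-1).+1 (@Zp_add (r.-1).+1) (@Zp_opp (r.-1).+1) (@Zp0 r.-1)
    (@Zp_addA (r.-1).+1) (@Zp_add0z r.-1) (@Zp_addNz r.-1).

(* Main.v *)
Require Import Defs.
From HB Require Import structures.
From mathcomp Require Import all_boot all_order all_algebra.
From Stdlib Require Import FunctionalExtensionality ProofIrrelevance PropExtensionality ClassicalEpsilon.
Set Implicit Arguments. Unset Strict Implicit. Unset Printing Implicit Defensive.

Section Basics.
Variable G : group.
Local Notation "x ** y" := (@gmul G x y) (at level 40, left associativity).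
Local Notation inv := (@ginv G).
Local Notation one := (@gone G).
Implicit Types x y z : G.

Lemma mulgA' x y z : x ** (y ** z) = x ** y ** z. Proof. exact: gmulA. Qed.
Lemma mul1g' x : one ** x = x. Proof. exact: gmul1. Qed.
Lemma mulVg' x : inv x ** x = one. Proof. exact: gmulV. Qed.
Lemma mulgV' x : x ** inv x = one.
Proof.
rewrite -[x ** inv x]mul1g' -[in X in X ** _](mulVg' (inv x)).
by rewrite -mulgA' [inv x ** _]mulgA' mulVg' mul1g' mulVg'.
Qed.
Lemma mulg1' x : x ** one = x.
Proof. by rewrite -(mulVg' x) mulgA' mulgV' mul1g'. Qed.
Lemma mulKg' x y : inv x ** (x ** y) = y.
Proof. by rewrite mulgA' mulVg' mul1g'. Qed.
Lemma mulVKg' x y : x ** (inv x ** y) = y.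
Proof. by rewrite mulgA' mulgV' mul1g'. Qed.
Lemma mulgK' x y : x ** y ** inv y = x.
Proof. by rewrite -mulgA' mulgV' mulg1'. Qed.
Lemma mulgVK' x y : x ** inv y ** y = x.
Proof. by rewrite -mulgA' mulVg' mulg1'. Qed.
Lemma mulgI x y z : x ** y = x ** z -> y = z.
Proof. by move=> h; rewrite -(mulKg' x y) h mulKg'. Qed.
Lemma mulIg x y z : y ** x = z ** x -> y = z.
Proof. by move=> h; rewrite -(mulgK' y x) h mulgK'. Qed.
Lemma invgK x : inv (inv x) = x.
Proof. by apply: (@mulIg (inv x)); rewrite mulVg' mulgV'. Qed.
Lemma invMg x y : inv (x ** y) = inv y ** inv x.
Proof. by apply: (@mulgI (x ** y)); rewrite mulgV' -mulgA' mulVKg' mulgV'. Qed.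
Lemma inv1 : inv one = one.
Proof. by rewrite -{2}(mulVg' one) mulg1'. Qed.
Lemma inv_eq x y : x ** y = one -> inv x = y.
Proof. by move=> h; apply: (@mulgI x); rewrite mulgV' h. Qed.
Lemma eq_mulgV x y : x ** inv y = one -> x = y.
Proof. by move=> h; rewrite -(mulgVK' x y) h mul1g'. Qed.

End Basics.

Section Powers.
Variable G : group.
Local Notation "x ** y" := (@gmul G x y) (at level 40, left associativity).
Local Notation inv := (@ginv G).
Local Notation one := (@gone G).
Implicit Types x y z : G.

Definition gcommute x y := x ** y = y ** x.

Lemma gpown0 x : gpown x 0 = one. Proof. by []. Qed.
Lemma gpownS x n : gpown x n.+1 = x ** gpown x n. Proof. by []. Qed.
Lemma gpown1 x : gpown x 1 = x. Proof. by rewrite /= mulg1'. Qed.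
Lemma gpownD x m n : gpown x (m + n) = gpown x m ** gpown x n.
Proof. by elim: m => [|m IH] /=; rewrite ?mul1g' // IH mulgA'. Qed.
Lemma gpownSr x n : gpown x n.+1 = gpown x n ** x.
Proof. by rewrite -addn1 gpownD gpown1. Qed.
Lemma gpownM x m n : gpown x (m * n) = gpown (gpown x m) n.
Proof. by elim: n => [|n IH]; rewrite ?muln0 // mulnS gpownD IH. Qed.
Lemma gpown_one n : gpown one n = one.
Proof. by elim: n => //= n ->; rewrite mul1g'. Qed.
Lemma gcommute_sym x y : gcommute x y -> gcommute y x. Proof. by []. Qed.
Lemma gcommuteM x y z : gcommute x z -> gcommute y z -> gcommute (x ** y) z.
Proof. by rewrite /gcommute => h1 h2; rewrite -mulgA' h2 mulgA' h1 -mulgA'. Qed.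
Lemma gcommuteV x y : gcommute x y -> gcommute (inv x) y.
Proof.
rewrite /gcommute => h; apply: (@mulgI _ x); rewrite mulVKg' mulgA' h mulgK'.
done.
Qed.
Lemma gcommute1 y : gcommute one y. Proof. by rewrite /gcommute mul1g' mulg1'. Qed.
Lemma gcommuten x y n : gcommute x y -> gcommute (gpown x n) y.
Proof. by move=> h; elim: n => [|n IH]; [exact: gcommute1| exact: gcommuteM]. Qed.
Lemma gcommute_refl x : gcommute x x. Proof. by []. Qed.
Lemma gcommute_pown x m n : gcommute (gpown x m) (gpown x n).
Proof. apply: gcommuten; apply: gcommute_sym; apply: gcommuten; exact: gcommute_refl. Qed.
Lemma gpown_inv x n : inv (gpown x n) = gpown (inv x) n.
Proof.
elim: n => [|n IH]; first by rewrite /= inv1.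
by rewrite gpownS invMg IH -gpownSr.
Qed.
Lemma gpown_mul x y n : gcommute x y -> gpown (x ** y) n = gpown x n ** gpown y n.
Proof.
move=> h; elim: n => [|n IH]; first by rewrite /= mul1g'.
have hc : gcommute (gpown x n) y by exact: gcommuten.
by rewrite !gpownS IH -!mulgA' (mulgA' y) -hc !mulgA'.
Qed.

Lemma gpowz_sub x m n : gpowz x (m%:Z - n%:Z)%R = gpown x m ** inv (gpown x n).
Proof.
case: (leqP n m) => hnm.
  rewrite subzn // /=.
  by rewrite -{2}(subnK hnm) gpownD mulgK'.
rewrite -GRing.opprB subzn ?(ltnW hnm) //.
have hd : (0 < n - m)%N by rewrite subn_gt0.
rewrite -{2}(subnK (ltnW hnm)) gpownD invMg mulgA'.
case: (n - m)%N hd => [|d] // _.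
rewrite -NegzE /=.
have -> : gpown x m ** inv (gpown x m) = one by rewrite mulgV'.
by rewrite mul1g'.
Qed.
Lemma int_sub_nat (k : int) : exists m n : nat, k = (m%:Z - n%:Z)%R.
Proof.
case: k => n; first by exists n, 0%N; rewrite GRing.subr0.
by exists 0%N, n.+1; rewrite NegzE GRing.sub0r.
Qed.
Lemma gpowz_nat x (n : nat) : gpowz x n = gpown x n. Proof. by []. Qed.
Lemma gcommute_powz x y k : gcommute x y -> gcommute (gpowz x k) y.
Proof. by move=> h; case: k => n; [exact: gcommuten | apply: gcommuteV; exact: gcommuten]. Qed.
Lemma gpowzD x k l : gpowz x (k + l)%R = gpowz x k ** gpowz x l.
Proof.
have [m1 [n1 ->]] := int_sub_nat k; have [m2 [n2 ->]] := int_sub_nat l.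
have -> : ((m1%:Z - n1%:Z) + (m2%:Z - n2%:Z) = (m1 + m2)%N%:Z - (n1 + n2)%N%:Z)%R.
  by rewrite !PoszD GRing.opprD GRing.addrACA.
rewrite !gpowz_sub !gpownD invMg.
have hc : gcommute (inv (gpown x n1)) (gpown x m2).
  apply: gcommuteV; exact: gcommute_pown.
have hc2 : gcommute (inv (gpown x n1)) (inv (gpown x n2)).
  apply: gcommuteV; apply: gcommute_sym; apply: gcommuteV; exact: gcommute_pown.
rewrite !mulgA' -(mulgA' _ (inv (gpown x n1))) hc mulgA'.
by rewrite -(mulgA' _ (inv (gpown x n1))) hc2 mulgA'.
Qed.
Lemma gpowzN x k : gpowz x (- k)%R = inv (gpowz x k).
Proof.
have [m [n ->]] := int_sub_nat k.
by rewrite GRing.opprB !gpowz_sub invMg invgK.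
Qed.
Lemma gpowz1 x : gpowz x 1 = x. Proof. exact: gpown1. Qed.
Lemma gpowz0 x : gpowz x 0 = one. Proof. by []. Qed.
Lemma gpowzMn x k (n : nat) : gpowz x (k * n%:Z)%R = gpown (gpowz x k) n.
Proof.
elim: n => [|n IH]; first by rewrite GRing.mulr0.
by rewrite -addn1 PoszD GRing.mulrDr GRing.mulr1 gpowzD IH gpownD gpown1.
Qed.
Lemma gpowzM x k l : gpowz x (k * l)%R = gpowz (gpowz x k) l.
Proof.
case: l => n; first exact: gpowzMn.
by rewrite NegzE GRing.mulrN (gpowzN x) gpowzMn.
Qed.
Lemma gpowz_one k : gpowz one k = one.
Proof. by case: k => n; rewrite /gpowz gpown_one ?inv1. Qed.
Lemma gpowz_inv x k : gpowz (inv x) k = inv (gpowz x k).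
Proof. by case: k => n; rewrite /gpowz -gpown_inv. Qed.
Lemma gpowz_mul x y k : gcommute x y -> gpowz (x ** y) k = gpowz x k ** gpowz y k.
Proof.
move=> h; case: k => n; rewrite /gpowz gpown_mul //.
rewrite invMg; apply: gcommute_sym; apply: gcommuteV; apply: gcommute_sym.
apply: gcommuteV; apply: gcommuten; apply: gcommute_sym; exact: gcommuten.
Qed.

End Powers.

Section Subgroups.
Variable G : group.
Local Notation "x ** y" := (@gmul G x y) (at level 40, left associativity).
Local Notation inv := (@ginv G).
Local Notation one := (@gone G).
Implicit Types (x y z : G) (A S N : G -> Prop).

Lemma ggen_in A x : A x -> ggen A x.
Proof. by move=> h S _ sub; exact: sub. Qed.
Lemma ggen_min A S : gsubgroup S -> gsubset A S -> gsubset (ggen A) S.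
Proof. by move=> hS sub x hx; exact: hx. Qed.
Lemma ggen_subgroup A : gsubgroup (ggen A).
Proof.
split.
- by move=> S [h1 _ _].
- by move=> x y hx hy S hS sub; case: (hS) => _ hM _; apply: hM; [exact: hx|exact: hy].
- by move=> x hx S hS sub; case: (hS) => _ _ hV; apply: hV; exact: hx.
Qed.
Lemma ggen_mono A B : gsubset A B -> gsubset (ggen A) (ggen B).
Proof.
move=> sAB; apply: ggen_min; first exact: ggen_subgroup.
by move=> x hx; apply: ggen_in; exact: sAB.
Qed.
Lemma gsetT_subgroup : gsubgroup (gsetT G). Proof. by []. Qed.

Lemma sg1 S : gsubgroup S -> S one. Proof. by case. Qed.
Lemma sgM S x y : gsubgroup S -> S x -> S y -> S (x ** y). Proof. by case=> _ h _; exact: h. Qed.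
Lemma sgV S x : gsubgroup S -> S x -> S (inv x). Proof. by case=> _ _ h; exact: h. Qed.
Lemma sgVr S x : gsubgroup S -> S (inv x) -> S x.
Proof. by move=> hS h; rewrite -(invgK x); exact: sgV. Qed.
Lemma sgn S x n : gsubgroup S -> S x -> S (gpown x n).
Proof. by move=> hS hx; elim: n => [|n IH]; [exact: sg1|exact: sgM]. Qed.
Lemma sgz S x k : gsubgroup S -> S x -> S (gpowz x k).
Proof. by move=> hS hx; case: k => n; [exact: sgn | apply: sgV => //; exact: sgn]. Qed.
Lemma sgMl S x y : gsubgroup S -> S x -> S (x ** y) -> S y.
Proof. by move=> hS hx hxy; rewrite -(mulKg' x y); apply: sgM => //; exact: sgV. Qed.
Lemma sgMr S x y : gsubgroup S -> S y -> S (x ** y) -> S x.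
Proof. by move=> hS hy hxy; rewrite -(mulgK' x y); apply: sgM => //; exact: sgV. Qed.

Lemma gconj_in S x g : gsubgroup S -> S x -> S g -> S (gconj x g).
Proof. move=> hS hx hg; rewrite /gconj; apply: (sgM hS) => //; apply: (sgM hS) => //; exact: sgV. Qed.
Lemma gcomm_in S x y : gsubgroup S -> S x -> S y -> S (gcomm x y).
Proof.
move=> hS hx hy; rewrite /gcomm; apply: (sgM hS); apply: (sgM hS) => //; exact: sgV.
Qed.

Lemma gcenter_subgroup S : gsubgroup S -> gsubgroup (gcenter S).
Proof.
move=> hS; split.
- by split; [exact: sg1 | move=> y _; rewrite mul1g' mulg1'].
- move=> x y [hx cx] [hy cy]; split; first exact: sgM.
  by move=> z hz; exact: (gcommuteM (cx z hz) (cy z hz)).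
- move=> x [hx cx]; split; first exact: sgV.
  by move=> z hz; exact: (gcommuteV (cx z hz)).
Qed.
Lemma gderived_subgroup S : gsubgroup (gderived S). Proof. exact: ggen_subgroup. Qed.
Lemma gderived_sub S : gsubgroup S -> gsubset (gderived S) S.
Proof.
move=> hS; apply: ggen_min => // z [x [y [hx hy ->]]]; exact: gcomm_in.
Qed.
Lemma gcomm_derived S x y : S x -> S y -> gderived S (gcomm x y).
Proof. by move=> hx hy; apply: ggen_in; exists x, y. Qed.

End Subgroups.

Section Homs.
Variables G K : group.
Variable f : G -> K.
Hypothesis hf : is_hom f.

Lemma hom1 : f gone = gone.
Proof. by apply: (@mulgI _ (f gone)); rewrite -hf !mulg1'. Qed.
Lemma homV x : f (ginv x) = ginv (f x).
Proof. by apply: (@mulgI _ (f x)); rewrite -hf !mulgV' hom1. Qed.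
Lemma homn x n : f (gpown x n) = gpown (f x) n.
Proof. by elim: n => [|n IH] /=; rewrite ?hom1 // hf IH. Qed.
Lemma homz x k : f (gpowz x k) = gpowz (f x) k.
Proof. by case: k => n; rewrite /gpowz ?homV homn. Qed.
Lemma hom_comm x y : f (gcomm x y) = gcomm (f x) (f y).
Proof. by rewrite /gcomm !hf !homV. Qed.
Lemma hom_conj x y : f (gconj x y) = gconj (f x) (f y).
Proof. by rewrite /gconj !hf !homV. Qed.
Lemma preim_subgroup (S : K -> Prop) : gsubgroup S -> gsubgroup (fun x => S (f x)).
Proof.
move=> hS; split.
- by rewrite hom1; exact: sg1.
- by move=> x y hx hy; rewrite hf; exact: sgM.
- by move=> x hx; rewrite homV; exact: sgV.
Qed.
Lemma hom_ggen (A : G -> Prop) (B : K -> Prop) :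
  (forall x, A x -> B (f x)) -> forall x, ggen A x -> ggen B (f x).
Proof.
move=> h; apply: ggen_min; first by apply: preim_subgroup; exact: ggen_subgroup.
by move=> x hx; apply: ggen_in; exact: h.
Qed.
End Homs.

Lemma comp_hom (G K L : group) (f : G -> K) (g : K -> L) :
  is_hom f -> is_hom g -> is_hom (fun x => g (f x)).
Proof. by move=> hf hg x y; rewrite hf hg. Qed.

Lemma conj_hom (G : group) (g : G) : is_hom (fun x => gconj x g).
Proof.
move=> x y; rewrite /gconj.
by rewrite -!mulgA' (mulgA' g) mulgV' mul1g'.
Qed.

Definition gnormalT (G : group) (N : G -> Prop) :=
  gsubgroup N /\ forall x g, N x -> N (gconj x g).

Section Quotient.
Variable G : group.
Local Notation "x ** y" := (@gmul G x y) (at level 40, left associativity).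
Local Notation inv := (@ginv G).
Local Notation one := (@gone G).
Variable N : G -> Prop.
Hypothesis hN : gnormalT N.

Lemma sig_irr (A : Type) (P : A -> Prop) (u v : sig P) : proj1_sig u = proj1_sig v -> u = v.
Proof. case: u => u hu; case: v => v hv /= e; subst v; congr exist; exact: proof_irrelevance. Qed.

Definition coset (x : G) : G -> Prop := fun y => N (y ** inv x).
Definition qcar := {P : G -> Prop | exists x, P = coset x}.
Definition qpi (x : G) : qcar := exist _ (coset x) (ex_intro _ x erefl).
Definition qrep (P : qcar) : G := proj1_sig (constructive_indefinite_description _ (proj2_sig P)).
Lemma qpi_rep P : qpi (qrep P) = P.
Proof.
rewrite /qrep; case: (constructive_indefinite_description _ _) => x hx /=.
case: P hx => P hP /= hx; subst P.
rewrite /qpi; congr exist; exact: proof_irrelevance.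
Qed.
Lemma hNs : gsubgroup N. Proof. by case: hN. Qed.
Lemma qpiP x y : qpi x = qpi y <-> N (x ** inv y).
Proof.
split.
  move=> h; have : coset x x by rewrite /coset mulgV'; exact: sg1 hNs.
  by have -> : coset x = coset y by move: h => /(congr1 (@proj1_sig _ _)).
move=> h; rewrite /qpi.
have e : coset x = coset y.
  apply: functional_extensionality => z; apply: propositional_extensionality.
  rewrite /coset; split => hz.
    have -> : z ** inv y = (z ** inv x) ** (x ** inv y) by rewrite -mulgA' mulKg'.
    exact: sgM hNs hz h.
  have -> : z ** inv x = (z ** inv y) ** inv (x ** inv y) by rewrite invMg invgK -mulgA' mulKg'.
  by apply: sgM hNs hz _; apply: sgV hNs h.
exact: sig_irr.
Qed.
Lemma qpi_congr u u' v v' : qpi u = qpi u' -> qpi v = qpi v' -> qpi (u ** v) = qpi (u' ** v').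
Proof.
move=> /qpiP hu /qpiP hv; apply/qpiP.
have -> : u ** v ** inv (u' ** v') = gconj (v ** inv v') (inv u) ** (u ** inv u').
  by rewrite /gconj invgK invMg !mulgA' mulgVK'.
by apply: sgM hNs _ hu; case: hN => _ hc; exact: hc.
Qed.
Lemma qpi_congrV u u' : qpi u = qpi u' -> qpi (inv u) = qpi (inv u').
Proof.
move=> /qpiP hu; apply/qpiP.
have -> : inv u ** inv (inv u') = gconj (inv (u ** inv u')) u.
  by rewrite /gconj invMg !invgK !mulgA' mulgVK'.
by case: hN => hs hc; apply: hc; exact: sgV hs hu.
Qed.

Definition qmul (P Q : qcar) := qpi (qrep P ** qrep Q).
Definition qinv (P : qcar) := qpi (inv (qrep P)).
Definition qone := qpi one.
Lemma qmulE x y : qmul (qpi x) (qpi y) = qpi (x ** y).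
Proof. by apply: qpi_congr; rewrite qpi_rep. Qed.
Lemma qinvE x : qinv (qpi x) = qpi (inv x).
Proof. by apply: qpi_congrV; rewrite qpi_rep. Qed.
Lemma qmulA P Q R : qmul P (qmul Q R) = qmul (qmul P Q) R.
Proof.
by rewrite -(qpi_rep P) -(qpi_rep Q) -(qpi_rep R) !qmulE mulgA'.
Qed.
Lemma qmul1 P : qmul qone P = P.
Proof. by rewrite -(qpi_rep P) /qone qmulE mul1g'. Qed.
Lemma qmulV P : qmul (qinv P) P = qone.
Proof. by rewrite -(qpi_rep P) qinvE qmulE mulVg'. Qed.

Definition quot : group := @Defs.Group qcar qmul qinv qone qmulA qmul1 qmulV.
Definition qproj : G -> quot := qpi.
Lemma qproj_hom : is_hom qproj.
Proof. by move=> x y; rewrite /qproj /= qmulE. Qed.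
Lemma qproj_eq1 x : qproj x = gone <-> N x.
Proof.
by rewrite /qproj /= /qone qpiP inv1 mulg1'.
Qed.
Lemma qproj_eq x y : qproj x = qproj y <-> N (x ** inv y).
Proof. exact: qpiP. Qed.
Lemma qproj_surj (P : quot) : exists x, qproj x = P.
Proof. by exists (qrep P); exact: qpi_rep. Qed.
End Quotient.

Section Helpers.
Variable G : group.
Local Notation "x ** y" := (@gmul G x y) (at level 40, left associativity).
Local Notation inv := (@ginv G).
Local Notation one := (@gone G).
Implicit Types x y z w : G.

Definition Zc z := forall w, gcommute z w.

Lemma gcomm1_commute u v : gcomm u v = one -> gcommute u v.
Proof.
move=> h; have e : v ** u ** gcomm u v = u ** v.
  by rewrite /gcomm !mulgA' mulgK' mulgV' mul1g'.
by rewrite /gcommute -e h mulg1'.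
Qed.
Lemma Zc1 : Zc one. Proof. exact: gcommute1. Qed.
Lemma ZcM x y : Zc x -> Zc y -> Zc (x ** y).
Proof. by move=> hx hy w; exact: gcommuteM. Qed.
Lemma ZcV x : Zc x -> Zc (inv x).
Proof. by move=> hx w; exact: gcommuteV. Qed.
Lemma Zc_subgroup : gsubgroup Zc.
Proof. by split; [exact: Zc1| exact: ZcM| exact: ZcV]. Qed.
Lemma gconj_central x Z y : Zc Z -> gconj x (Z ** y) = gconj x y.
Proof.
move=> hZ; rewrite /gconj invMg.
by rewrite !mulgA' -(mulgA' _ (inv Z)) (ZcV hZ x) !mulgA' mulgVK'.
Qed.
Lemma gcomm_central_l Z y w : Zc Z -> gcomm (Z ** y) w = gcomm y w.
Proof.
move=> hZ; rewrite /gcomm invMg.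
have h1 : inv Z ** inv w = inv w ** inv Z by exact: (ZcV hZ (inv w)).
rewrite -!mulgA' (mulgA' (inv Z)) h1 -!mulgA'; congr gmul; congr gmul.
by rewrite mulKg'.
Qed.
Lemma gcomm_central_r Z y w : Zc Z -> gcomm w (Z ** y) = gcomm w y.
Proof.
move=> hZ; rewrite /gcomm invMg.
have h1 : inv Z ** w = w ** inv Z by exact: (ZcV hZ w).
rewrite -!mulgA'; congr gmul; congr gmul.
by rewrite (mulgA' (inv Z)) h1 -mulgA' (mulgA' (inv Z)) mulVg' mul1g'.
Qed.
Lemma mul_inv_central x C : Zc C -> x ** inv (x ** C) = inv C.
Proof. by move=> hC; rewrite invMg mulgA' -(ZcV hC x) mulgK'. Qed.
Lemma gconj_conj x g h : gconj (gconj x g) h = gconj x (g ** h).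
Proof. by rewrite /gconj invMg !mulgA'. Qed.
Lemma gconj1 x : gconj x one = x.
Proof. by rewrite /gconj inv1 mul1g' mulg1'. Qed.
Lemma Zc_pown x n : Zc x -> Zc (gpown x n).
Proof. by move=> h w; exact: gcommuten. Qed.
Lemma Zc_powz x k : Zc x -> Zc (gpowz x k).
Proof. by move=> h w; exact: gcommute_powz. Qed.
Lemma Zc_conj x g : Zc x -> gconj x g = x.
Proof. by move=> h; rewrite /gconj -(h (inv g)) mulgVK'. Qed.

End Helpers.

Section AbelGen.
Variables (T K : group) (a b : T) (pi : T -> K).
Hypothesis hpi : is_hom pi.
Hypothesis gen : forall S, gsubgroup S -> S a -> S b -> forall x, S x.
Hypothesis hab : gcommute (pi a) (pi b).

Lemma centralizer_subgroup (w : K) : gsubgroup (fun t => gcommute (pi t) w).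
Proof.
split.
- by rewrite hom1 //; exact: gcommute1.
- by move=> x y hx hy; rewrite hpi; exact: gcommuteM.
- by move=> x hx; rewrite homV //; exact: gcommuteV.
Qed.
Lemma abel_gen s t : gcommute (pi s) (pi t).
Proof.
have hA : forall t, gcommute (pi t) (pi a).
  apply: gen; [exact: centralizer_subgroup | exact: gcommute_refl | exact: gcommute_sym].
have hB : forall t, gcommute (pi t) (pi b).
  apply: gen; [exact: centralizer_subgroup | exact: gcommute_sym | exact: gcommute_refl].
move: s; apply: gen; first exact: centralizer_subgroup.
- exact: gcommute_sym.
- exact: gcommute_sym.
Qed.
End AbelGen.

Definition Zgrp : group := @Defs.Group int +%R (fun x => - x)%R 0%R (@GRing.addrA _) (@GRing.add0r _) (@GRing.addNr _).
Lemma Zgrp_pown (u : Zgrp) n : gpown u n = (n%:Z * (u : int))%R.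
Proof.
elim: n => [|n IH]; first by rewrite GRing.mul0r.
by rewrite gpownS IH /= -addn1 PoszD GRing.mulrDl GRing.mul1r GRing.addrC.
Qed.
Lemma Zgrp_powz (u : Zgrp) k : gpowz u k = (k * (u : int))%R.
Proof.
case: k => n; first exact: Zgrp_pown.
by rewrite /gpowz Zgrp_pown NegzE GRing.mulNr.
Qed.

Lemma Zr_pown r (u : Zr_group r) n : nat_of_ord (gpown u n) = (n * u) %% (r.-1).+1.
Proof.
elim: n => [|n IH]; first by rewrite mul0n mod0n.
rewrite gpownS /= IH modnDmr mulSn //.
Qed.
Lemma Zr_eq r (u v : Zr_group r) : nat_of_ord u = nat_of_ord v -> u = v.
Proof. exact: ord_inj. Qed.
Lemma Zr_one r : nat_of_ord (gone : Zr_group r) = 0. Proof. by []. Qed.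
Lemma Zr_inZp r k : nat_of_ord (inZp k : Zr_group r) = k %% (r.-1).+1. Proof. by []. Qed.

Lemma inv_mod m n : 0 < m -> coprime m n -> exists k j, m * k = 1 + j * n.
Proof.
move=> hm hmn; case: (Bezoutl n hm) => j _ hd.
move: hmn; rewrite /coprime => /eqP e; rewrite e in hd.
by exists ((1 + j * n) %/ m), j; rewrite mulnC divnK.
Qed.

Section AbelCalc.
Variables (p q : nat) (p1 q1 : int).
Hypothesis hbez : (p%:Z * p1 + q%:Z * q1 = 1)%R.
Variable K : group.
Variables A B : K.
Hypothesis hAB : gcommute A B.
Hypothesis hrel : gpown A p = gpown B q.

Lemma powz_mul_comm k l n :
  gpown (gmul (gpowz A k) (gpowz B l)) n = gmul (gpowz (gpown A n) k) (gpowz (gpown B n) l).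
Proof.
have hc : gcommute (gpowz A k) (gpowz B l).
  by apply: gcommute_powz; apply: gcommute_sym; apply: gcommute_powz; exact: gcommute_sym.
rewrite gpown_mul // -!gpowzMn -!(gpowz_nat _ n) -!gpowzM.
by rewrite (GRing.mulrC k) (GRing.mulrC l).
Qed.

Lemma abel_calc :
  gpown (gmul (gpowz A q1) (gpowz B p1)) q = A /\
  gpown (gmul (gpowz A q1) (gpowz B p1)) p = B.
Proof.
split.
- rewrite powz_mul_comm -!(gpowz_nat _ q) -!gpowzM.
  rewrite (_ : gpowz B (q%:Z * p1) = gpowz A (p%:Z * p1)).
    by rewrite -gpowzD GRing.addrC hbez gpowz1.
  by rewrite !gpowzM !gpowz_nat hrel.
- rewrite powz_mul_comm -!(gpowz_nat _ p) -!gpowzM.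
  rewrite (_ : gpowz A (p%:Z * q1) = gpowz B (q%:Z * q1)).
    by rewrite -gpowzD GRing.addrC hbez gpowz1.
  by rewrite !gpowzM !gpowz_nat hrel.
Qed.
End AbelCalc.

Section Model.
Variables (p q : nat).
Hypotheses (hp : 2 <= p) (hq : 2 <= q).

Definition md (bl : bool) := if bl then p else q.
Lemma md_gt1 bl : 1 < md bl. Proof. by case: bl. Qed.
Definition okl (l : bool * nat) := (0 < l.2) && (l.2 < md l.1).
Definition starts (bl : bool) (w : seq (bool * nat)) :=
  if w is l :: _ then l.1 == bl else false.
Fixpoint reduced (w : seq (bool * nat)) :=
  if w is l :: t then [&& okl l, ~~ starts l.1 t & reduced t] else true.

Definition act (bl : bool) (w : seq (bool * nat)) :=
  match w with
  | l :: t => if l.1 == bl then (if l.2.+1 == md bl then t else (bl, l.2.+1) :: t)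
              else (bl, 1) :: w
  | [::] => [:: (bl, 1)]
  end.

Lemma act_red bl w : reduced w -> reduced (act bl w).
Proof.
case: w => [|[bl' e] t] /=; first by rewrite /okl /= md_gt1.
case/and3P => /andP [he hem] hst ht.
case: eqP => [ebl|nbl].
  subst bl'; case: eqP => [//|ne] /=.
  rewrite /= /okl /= hst ht /= !andbT ltn_neqAle hem andbT.
  by apply/eqP.
rewrite /= /okl /= md_gt1 he hem hst ht /= andbT.
by apply/eqP.
Qed.

Definition mk (bl : bool) (e : nat) (v : seq (bool * nat)) :=
  if e is 0 then v else (bl, e) :: v.

Lemma act_mk bl e v : e < md bl -> ~~ starts bl v -> act bl (mk bl e v) = mk bl (e.+1 %% md bl) v.
Proof.
move=> he hv; case: e he => [|e] he /=.
  rewrite modn_small ?md_gt1 //.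
  by case: v hv => [|[bl' e'] t] //= /negbTE ->.
rewrite eqxx; case: eqP => [->|ne]; first by rewrite modnn.
by rewrite modn_small // ltn_neqAle; apply/andP; split; [apply/eqP|].
Qed.

Lemma iter_act_mk bl e v n : e < md bl -> ~~ starts bl v ->
  iter n (act bl) (mk bl e v) = mk bl ((e + n) %% md bl) v.
Proof.
move=> he hv; elim: n => [|n IH]; first by rewrite addn0 modn_small.
rewrite iterS IH act_mk // ?ltn_pmod //; last by rewrite (ltn_trans _ (md_gt1 bl)).
by rewrite -addn1 modnDml addn1 addnS.
Qed.

Lemma red_decomp bl w : reduced w -> exists e v, [/\ e < md bl, ~~ starts bl v, reduced v & w = mk bl e v].
Proof.
case: w => [|[bl' e] t] /=.
  by move=> _; exists 0, [::]; split => //; rewrite (ltn_trans _ (md_gt1 bl)).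
case/and3P => /andP [he hem] hst ht.
case: (eqVneq bl' bl) => [ebl|nbl].
  subst bl'; exists e, t; split => //.
  by case: e he {hem}.
exists 0, ((bl', e) :: t); split => //=.
- by rewrite (ltn_trans _ (md_gt1 bl)).
- by rewrite /= /okl /= he hem hst ht.
Qed.

Lemma iter_act_md bl w : reduced w -> iter (md bl) (act bl) w = w.
Proof.
move=> hw; case: (red_decomp bl hw) => e [v [he hv _ ->]].
by rewrite iter_act_mk // modnDr modn_small.
Qed.

Definition W := {w : seq (bool * nat) | reduced w}.
Definition actW bl (w : W) : W := exist _ (act bl (val w)) (act_red bl (valP w)).
Lemma iter_actW bl n (w : W) : val (iter n (actW bl) w) = iter n (act bl) (val w).
Proof. by elim: n => [|n IH] //=; rewrite IH. Qed.
Lemma W_eq (u v : W) : val u = val v -> u = v.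
Proof. exact: sig_irr. Qed.
Lemma iter_actW_md bl (w : W) : iter (md bl) (actW bl) w = w.
Proof. by apply: W_eq; rewrite iter_actW iter_act_md // (valP w). Qed.

Record perm := Perm { pf : W -> W; pg : W -> W; pfK : cancel pf pg; pgK : cancel pg pf }.

Lemma perm_ext (s t : perm) : (forall w, pf s w = pf t w) -> s = t.
Proof.
case: s => f g fK gK; case: t => f' g' fK' gK' /= h.
have ef : f = f' by apply: functional_extensionality.
subst f'.
have eg : g = g'.
  apply: functional_extensionality => w.
  by rewrite -{1}(gK' w) fK.
subst g'; congr Perm; exact: proof_irrelevance.
Qed.

Definition pmul (s t : perm) : perm.
Proof.
refine (@Perm (fun w => pf s (pf t w)) (fun w => pg t (pg s w)) _ _).
- by move=> w /=; rewrite pfK pfK.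
- by move=> w /=; rewrite pgK pgK.
Defined.
Definition pinv (s : perm) : perm := @Perm (pg s) (pf s) (@pgK s) (@pfK s).
Definition pone : perm := @Perm id id (fun _ => erefl) (fun _ => erefl).
Lemma pmulA s t u : pmul s (pmul t u) = pmul (pmul s t) u. Proof. exact: perm_ext. Qed.
Lemma pmul1 s : pmul pone s = s. Proof. exact: perm_ext. Qed.
Lemma pmulV s : pmul (pinv s) s = pone. Proof. by apply: perm_ext => w /=; rewrite pfK. Qed.
Definition PermG : group := @Defs.Group perm pmul pinv pone pmulA pmul1 pmulV.

Lemma PermG_pown (s : PermG) n w : pf (gpown s n) w = iter n (pf s) w.
Proof. by elim: n => [|n IH] //=; rewrite IH. Qed.

Definition Ab (bl : bool) : PermG.
Proof.
refine (@Perm (actW bl) (iter (md bl).-1 (actW bl)) _ _).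
- move=> w; rewrite -iterSr prednK ?iter_actW_md //; exact: (ltn_trans _ (md_gt1 bl)).
- move=> w; rewrite -iterS prednK ?iter_actW_md //; exact: (ltn_trans _ (md_gt1 bl)).
Defined.

Lemma Ab_md bl : gpown (Ab bl) (md bl) = gone.
Proof. apply: perm_ext => w; rewrite PermG_pown; exact: iter_actW_md. Qed.

Lemma reduced_rcons w l bl : reduced (rcons w l) -> l.1 != bl ->
  reduced (rcons (rcons w l) (bl, 1)).
Proof.
elim: w => [|x w IH] /=.
  move=> hl nb; rewrite andbT in hl; rewrite hl eq_sym nb /okl /= md_gt1.
  done.
case/and3P => hx hst hr nb; rewrite hx IH // andbT.
move: hst; clear IH hr; by case: w.
Qed.

Lemma act_neq_snoc bl w : w != [::] -> act bl w != w ++ [:: (bl, 1)].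
Proof.
case: w => [|[bl' e] t] // _.
case: (eqVneq bl' bl) => [<-|nbl].
  rewrite /= eqxx; case: (e.+1 == md bl') => /=.
    apply/eqP => /(congr1 size) /=; rewrite size_cat /= addn1 => /eqP.
    by rewrite (ltn_eqF (leqnSn _)).
  apply/eqP => /(congr1 size) /=; rewrite size_cat /= addn1 => /eqP.
  by rewrite eqSS (ltn_eqF (leqnn _)).
rewrite /= (negbTE nbl); apply/eqP => [[e1 _]].
by rewrite e1 eqxx in nbl.
Qed.

End Model.

Section Main.
Variables (p q : nat) (p1 q1 : int) (T : group) (a b : T).
Hypotheses (hp : 2 <= p) (hq : 2 <= q) (hpq : coprime p q).
Hypothesis hpres : torus_presentation p q a b.
Hypothesis hbez : (p%:Z * p1 + q%:Z * q1 = 1)%R.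
Local Notation "x ** y" := (@gmul T x y) (at level 40, left associativity).
Local Notation inv := (@ginv T).
Local Notation one := (@gone T).

Definition cc := gpown a p.

Lemma hrel : gpown a p = gpown b q. Proof. by case: hpres. Qed.
Lemma gen S : gsubgroup S -> S a -> S b -> forall x, S x.
Proof.
case: hpres => _ hg _ hS ha hb x; apply: (hg x S hS).
by move=> z [->|->].
Qed.
Lemma univ (K : group) (u v : K) : gpown u p = gpown v q ->
  exists f : T -> K, [/\ is_hom f, f a = u & f b = v].
Proof. by case: hpres => _ _ h; exact: h. Qed.

Lemma cc_central : Zc cc.
Proof.
move=> w; apply: gcommute_sym; move: w.
apply: gen.
- split; [exact: gcommute1 | move=> x y; exact: gcommuteM | move=> x; exact: gcommuteV].
- by apply: gcommute_sym; apply: gcommuten; exact: gcommute_refl.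
- by rewrite /cc hrel; apply: gcommute_sym; apply: gcommuten; exact: gcommute_refl.
Qed.
Lemma cc_b : cc = gpown b q. Proof. exact: hrel. Qed.

Lemma eps_ex : exists e : T -> Zgrp, [/\ is_hom e, e a = Posz q & e b = Posz p].
Proof.
apply: univ; rewrite !Zgrp_pown /=; exact: GRing.mulrC.
Qed.
Lemma cc_order k : gpowz cc k = one -> k = 0%R.
Proof.
case: eps_ex => e [he ea eb] h.
have : e (gpowz cc k) = 0%R by rewrite h (hom1 he).
rewrite (homz he) /cc (homn he) ea Zgrp_powz Zgrp_pown /=.
move/eqP; rewrite GRing.mulf_eq0 => /orP [/eqP //|].
rewrite -PoszM.
have : (0 < p * q)%N by rewrite muln_gt0 (leq_trans _ hp) // (leq_trans _ hq).
by case: (p * q)%N.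
Qed.

Section R.
Variable r : nat.
Hypotheses (hr : 1 <= r) (hrp : coprime r p) (hrq : coprime r q).
Definition ar := gpown a r.
Definition br := gpown b r.
Definition Gr := ggen (fun z => z = ar \/ z = br).
Definition xr := gmul (gpowz ar q1) (gpowz br p1).

Lemma Gr_sub : gsubgroup Gr. Proof. exact: ggen_subgroup. Qed.
Lemma Gr_ar : Gr ar. Proof. by apply: ggen_in; left. Qed.
Lemma Gr_br : Gr br. Proof. by apply: ggen_in; right. Qed.

Lemma decomp x : exists y, Gr y /\ Zc (x ** inv y).
Proof.
move: x; apply: gen.
- split.
  + by exists one; split; [exact: sg1 Gr_sub | rewrite inv1 mulg1'; exact: Zc1].
  + move=> x1 x2 [y1 [h1 z1]] [y2 [h2 z2]]; exists (y1 ** y2); split; first exact: sgM Gr_sub h1 h2.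
    have -> : x1 ** x2 ** inv (y1 ** y2) = (x2 ** inv y2) ** (x1 ** inv y1).
      rewrite invMg (_ : x1 ** x2 ** (inv y2 ** inv y1) = x1 ** (x2 ** inv y2) ** inv y1); last by rewrite !mulgA'.
      by rewrite -mulgA' (z2 (inv y1)) mulgA' (z2 (x1 ** inv y1)).
    exact: ZcM.
  + move=> x [y [hy z]]; exists (inv y); split; first exact: sgV Gr_sub hy.
    have -> : inv x ** inv (inv y) = gconj (inv (x ** inv y)) y.
      by rewrite /gconj invMg !invgK !mulgA' mulVg' mul1g'.
    by rewrite Zc_conj; exact: ZcV.
- case: (inv_mod hr hrp) => m [j e].
  exists (gpown ar m); split; first exact: sgn Gr_sub Gr_ar.
  rewrite /ar -gpownM e gpownD gpown1 (mulnC j) gpownM mul_inv_central.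
    exact: ZcV (Zc_pown _ cc_central).
  exact: Zc_pown cc_central.
- case: (inv_mod hr hrq) => m [j e].
  exists (gpown br m); split; first exact: sgn Gr_sub Gr_br.
  rewrite /br -gpownM e gpownD gpown1 (mulnC j) gpownM -cc_b mul_inv_central.
    exact: ZcV (Zc_pown _ cc_central).
  exact: Zc_pown cc_central.
Qed.

Lemma decomp' x : exists y Z, [/\ Gr y, Zc Z & x = Z ** y].
Proof.
case: (decomp x) => y [hy hz]; exists y, (x ** inv y); split => //.
by rewrite mulgVK'.
Qed.

Lemma Gr_normal x g : Gr x -> Gr (gconj x g).
Proof.
move=> hx; case: (decomp' g) => y [Z [hy hZ ->]].
rewrite gconj_central //; exact: gconj_in Gr_sub hx hy.
Qed.

Lemma center_Gr_central z : gcenter Gr z -> Zc z.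
Proof.
move=> [hz cz] w; case: (decomp' w) => y [Z [hy hZ ->]].
rewrite /gcommute mulgA' -(hZ z) -mulgA' (cz y hy) mulgA'.
done.
Qed.

Lemma derived_eq : gsame_set (gderived Gr) (gderived (gsetT T)).
Proof.
move=> t; split.
  apply: ggen_mono => z [x [y [_ _ ->]]]; by exists x, y.
apply: ggen_min; first exact: ggen_subgroup.
move=> z [x [y [_ _ ->]]].
case: (decomp' x) => x0 [Z1 [h1 hZ1 ->]]; case: (decomp' y) => y0 [Z2 [h2 hZ2 ->]].
rewrite gcomm_central_l // gcomm_central_r //.
exact: gcomm_derived.
Qed.

Lemma derivedT_Gr t : gderived (gsetT T) t -> Gr t.
Proof. by move/derived_eq; apply: gderived_sub; exact: Gr_sub. Qed.


Lemma trivial_subgroup (K : group) : gsubgroup (fun z : K => z = gone).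
Proof.
split => //; first by move=> x y -> ->; rewrite mul1g'.
by move=> x ->; exact: inv1.
Qed.

Lemma Gr_gnormal : gnormalT Gr.
Proof. split; [exact: Gr_sub | move=> x g hx; exact: Gr_normal]. Qed.

Lemma quotGr_gen x : exists i, Gr (x ** inv (gpown a i)).
Proof.
pose Q := quot Gr_gnormal.
pose pi := (@qproj T Gr Gr_gnormal).
have hpi : is_hom pi := qproj_hom Gr_gnormal.
pose A := pi a; pose B := pi b.
have hAr : gpown A r = gone by rewrite /A -(homn hpi); apply/qproj_eq1; exact: Gr_ar.
have hBr : gpown B r = gone by rewrite /B -(homn hpi); apply/qproj_eq1; exact: Gr_br.
have hAB : gpown A p = gpown B q by rewrite /A /B -!(homn hpi) hrel.
have hqr : coprime q r by rewrite coprime_sym.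
case: (inv_mod (leq_trans (isT : 0 < 2) hq) hqr) => s [t est].
have eB : B = gpown A (p * s).
  rewrite gpownM hAB -gpownM est gpownD gpown1 (mulnC t) gpownM hBr gpown_one mulg1'.
  done.
suff : forall x, exists i, pi x = gpown A i.
  move=> h; case: (h x) => i e; exists i; apply/(qproj_eq Gr_gnormal).
  by change (pi x = pi (gpown a i)); rewrite e /A -(homn hpi).
apply: gen.
- split.
  + by exists 0; rewrite (hom1 hpi).
  + move=> x1 x2 [i1 e1] [i2 e2]; exists (i1 + i2); by rewrite hpi e1 e2 gpownD.
  + move=> x1 [i e]; exists (i * r.-1); rewrite (homV hpi) e; apply: inv_eq.
    rewrite -gpownD (_ : i + i * r.-1 = r * i); last by rewrite -{2}(prednK hr) mulSn (mulnC r.-1).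
    by rewrite gpownM hAr gpown_one.
- by exists 1; rewrite gpown1.
- by exists (p * s).
Qed.

Lemma psi_spec : exists psi : T -> Zr_group r,
  [/\ is_hom psi, (forall x, psi x = gone <-> Gr x)
    & (forall k : Zr_group r, psi (gpown cc (nat_of_ord k)) = k)].
Proof.
have hpq0 : 0 < p * q by rewrite muln_gt0 (leq_trans _ hp) // (leq_trans _ hq).
have cop : coprime (p * q) r by rewrite coprimeMl !(coprime_sym _ r) hrp hrq.
case: (inv_mod hpq0 cop) => mm [jj emm].
have er : (r.-1).+1 = r := prednK hr.
pose u : Zr_group r := inZp (q * mm).
pose v : Zr_group r := inZp (p * mm).
have huv : gpown u p = gpown v q.
  apply: Zr_eq; rewrite !Zr_pown !Zr_inZp !modnMmr.
  by rewrite mulnCA.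
case: (univ huv) => psi [hpsi pa pb].
have psia n : nat_of_ord (psi (gpown a n)) = (n * (q * mm)) %% r.
  by rewrite (homn hpsi) pa Zr_pown Zr_inZp modnMmr er.
have psib n : nat_of_ord (psi (gpown b n)) = (n * (p * mm)) %% r.
  by rewrite (homn hpsi) pb Zr_pown Zr_inZp modnMmr er.
have GrK : forall x, Gr x -> psi x = gone.
  apply: ggen_min; first exact: (preim_subgroup hpsi (@trivial_subgroup _)).
  move=> z [->|->]; apply: Zr_eq; rewrite Zr_one.
    by rewrite /ar psia mulnC modnMl.
  by rewrite /br psib mulnC modnMl.
exists psi; split => //.
  move=> x; split; last exact: GrK.
  move=> hx; case: (quotGr_gen x) => i hi.
  have h1 : psi (x ** inv (gpown a i)) = gone by exact: GrK.
  rewrite hpsi (homV hpsi) hx mul1g' in h1.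
  have h2 : psi (gpown a i) = gone by rewrite -inv1 -h1 invgK.
  have : r %| i.
    move: (congr1 (@nat_of_ord _) h2); rewrite psia Zr_one => /eqP.
    rewrite -/(dvdn r _) => /(dvdn_mulr p).
    have -> : i * (q * mm) * p = i * (p * q * mm).
      by rewrite -mulnA; congr (_ * _); rewrite mulnC mulnA.
    rewrite emm mulnDr muln1 mulnA dvdn_addl //.
    exact: dvdn_mull.
  case/dvdnP => l el.
  have hai : Gr (gpown a i) by rewrite el mulnC gpownM; exact: sgn Gr_sub Gr_ar.
  by rewrite -(mulgVK' x (gpown a i)); exact: sgM Gr_sub hi hai.
move=> k; apply: Zr_eq.
rewrite /cc -gpownM psia.
rewrite (_ : p * k * (q * mm) = k + (k * jj) * r).
  have e2 : (r.-1).+1 <= r by rewrite er.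
  by rewrite addnC modnMDl modn_small // (leq_trans (ltn_ord k) e2).
by rewrite (mulnC p k) -mulnA (mulnA p) emm mulnDr muln1 mulnA.
Qed.

Lemma mul_central4 (x y C D : T) : Zc C -> x ** C ** (y ** D) = x ** y ** (C ** D).
Proof. by move=> hC; rewrite !mulgA' -(mulgA' x C y) (hC y) !mulgA'. Qed.

Lemma f_spec : exists f : T -> T,
     [/\ is_hom f, f a = ar, f b = br,
         (forall x y, f x = f y -> x = y)
       & (forall y, Gr y <-> exists x, f x = y)].
Proof.
have huv : gpown ar p = gpown br q.
  by rewrite /ar /br -!gpownM mulnC gpownM hrel -gpownM mulnC.
case: (univ huv) => f [hf fa fb].
have img : forall y, Gr y <-> exists x, f x = y.
  move=> y; split.
    move: y; apply: ggen_min.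
      split.
      - by exists one; exact: hom1.
      - by move=> x1 x2 [y1 <-] [y2 <-]; exists (y1 ** y2); exact: hf.
      - by move=> x1 [y1 <-]; exists (inv y1); exact: homV.
    by move=> z [->|->]; [exists a | exists b].
  case=> x <-; move: x; apply: gen; first exact: (preim_subgroup hf Gr_sub).
    by rewrite fa; exact: Gr_ar.
  by rewrite fb; exact: Gr_br.
exists f; split => //.
have hpq0 : 0 < p * q by rewrite muln_gt0 (leq_trans _ hp) // (leq_trans _ hq).
have cop : coprime r (p * q) by rewrite coprimeMr hrp hrq.
case: (inv_mod hr cop) => m [j em].
have hg : gpown (gpown a m) p = gpown (gpown b m) q.
  by rewrite -!gpownM mulnC gpownM hrel -gpownM mulnC.
case: (univ hg) => g [hgh ga gb].
have key : forall x, exists k : int, g (f x) = x ** gpowz cc k.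
  apply: gen.
  - split.
    + by exists 0%R; rewrite (hom1 hf) (hom1 hgh) gpowz0 mulg1'.
    + move=> x1 x2 [k1 e1] [k2 e2]; exists (k1 + k2)%R.
      rewrite hf hgh e1 e2 gpowzD mul_central4 //; exact: Zc_powz cc_central.
    + move=> x1 [k e]; exists (- k)%R.
      rewrite (homV hf) (homV hgh) e invMg gpowzN.
      by rewrite (ZcV (Zc_powz k cc_central) (inv x1)).
  - exists (Posz (j * q)); rewrite fa /ar (homn hgh) ga -gpownM mulnC em gpownD gpown1.
    by rewrite gpowz_nat /cc -gpownM mulnCA.
  - exists (Posz (j * p)); rewrite fb /br (homn hgh) gb -gpownM mulnC em gpownD gpown1.
    by rewrite gpowz_nat cc_b -gpownM (mulnC p q) mulnCA.
move=> x y exy; apply: eq_mulgV.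
set t := x ** inv y.
have ft : f t = one by rewrite /t hf (homV hf) exy mulgV'.
case: (key t) => k ek.
rewrite ft (hom1 hgh) in ek.
have et : t = gpowz cc (- k)%R.
  by rewrite gpowzN; apply: esym; apply: inv_eq; rewrite (Zc_powz k cc_central t) -ek.
have fcc : f cc = gpowz cc (Posz r).
  by rewrite /cc (homn hf) fa /ar -gpownM mulnC gpownM.
have : f t = one by [].
rewrite et (homz hf) fcc -gpowzM => /cc_order /eqP.
rewrite GRing.mulf_eq0 => /orP [/eqP er | /eqP ek0].
  by move: hr; rewrite -[r]/(absz (Posz r)) er.
by rewrite ek0 gpowz0.
Qed.

Lemma derT_gnormal : gnormalT (gderived (gsetT T)).
Proof.
split; first exact: ggen_subgroup.
move=> x g; apply: (@hom_ggen _ _ (fun x => gconj x g) (conj_hom g)).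
move=> z [u [v [_ _ ->]]]; exists (gconj u g), (gconj v g); split => //.
exact: (hom_comm (conj_hom g)).
Qed.

Definition x1 := gmul (gpowz a q1) (gpowz b p1).

Lemma derT_gen t : exists k : int, gderived (gsetT T) (t ** inv (gpowz x1 k)).
Proof.
pose pi := qproj derT_gnormal.
have hpi : is_hom pi := qproj_hom derT_gnormal.
have hab : gcommute (pi a) (pi b).
  apply: gcomm1_commute; rewrite -(hom_comm hpi); apply/qproj_eq1.
  exact: gcomm_derived.
have hrelAB : gpown (pi a) p = gpown (pi b) q by rewrite -!(homn hpi) hrel.
have [eA eB] := abel_calc hbez hab hrelAB.
set X := gmul (gpowz (pi a) q1) (gpowz (pi b) p1) in eA eB.
have eX : X = pi x1 by rewrite /x1 hpi !(homz hpi).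
suff : forall t, exists k, pi t = gpowz X k.
  move=> h; case: (h t) => k ek; exists k; apply/(qproj_eq derT_gnormal).
  by change (pi t = pi (gpowz x1 k)); rewrite ek eX (homz hpi).
apply: gen.
- split.
  + by exists 0%R; rewrite (hom1 hpi).
  + by move=> y1 y2 [k1 e1] [k2 e2]; exists (k1 + k2)%R; rewrite hpi e1 e2 gpowzD.
  + by move=> y [k e]; exists (- k)%R; rewrite (homV hpi) e gpowzN.
- by exists (Posz q); rewrite gpowz_nat eA.
- by exists (Posz p); rewrite gpowz_nat eB.
Qed.

Lemma iii1 y : Gr y -> exists k : int, gderived Gr (y ** inv (gpowz xr k)).
Proof.
case: f_spec => f [hf fa fb _ img] /img [t <-].
case: (derT_gen t) => k hk; exists k.
have -> : xr = f x1 by rewrite /x1 /xr hf !(homz hf) fa fb.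
rewrite -(homz hf) -(homV hf) -hf.
move: hk; apply: hom_ggen => // z [u [v [_ _ ->]]].
exists (f u), (f v); split; [by apply/img; exists u | by apply/img; exists v |].
exact: hom_comm.
Qed.

Lemma xr_in : Gr xr.
Proof. by apply: sgM Gr_sub _ _; apply: sgz Gr_sub _; [exact: Gr_ar | exact: Gr_br]. Qed.

Lemma ncl_T t : gnormal_closure (gsetT T) xr t <-> Gr t.
Proof.
split.
  move: t; apply: ggen_min; first exact: Gr_sub.
  by move=> z [g [_ ->]]; apply: Gr_normal; exact: xr_in.
set N := gnormal_closure (gsetT T) xr.
have hN : gnormalT N.
  split; first exact: ggen_subgroup.
  move=> x g; apply: (@hom_ggen _ _ (fun x => gconj x g) (conj_hom g)).
  by move=> z [h [_ ->]]; exists (h ** g); split => //; rewrite gconj_conj.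
pose pi := qproj hN.
have hpi : is_hom pi := qproj_hom hN.
pose A := pi a; pose B := pi b.
have hxr : pi xr = gone.
  apply/qproj_eq1; apply: ggen_in; exists one; split => //; by rewrite gconj1.
have exr : pi xr = gmul (gpowz (gpown A r) q1) (gpowz (gpown B r) p1).
  by rewrite /xr hpi !(homz hpi) !(homn hpi).
have hrelAB : gpown A p = gpown B q by rewrite -!(homn hpi) hrel.
have hAB : gcommute A B.
  have cz : coprimez (Posz r * q1)%R (Posz p).
    rewrite coprimezMl; apply/andP; split; first by rewrite coprimezE.
    by apply/coprimezP; exists (Posz q, p1); rewrite /= GRing.addrC (GRing.mulrC p1) hbez.
  case/coprimezP: cz => [[u v]] /= euv.
  set U := gpowz A (Posz r * q1)%R.
  set V := gpowz (gpown B r) p1.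
  have eU : U = ginv V.
    apply: eq_mulgV; rewrite invgK /U gpowzM gpowz_nat -exr; exact: hxr.
  have hU : gcommute U B.
    rewrite eU; apply: gcommuteV; apply: gcommute_powz; apply: gcommuten; exact: gcommute_refl.
  have hP : gcommute (gpown A p) B.
    by rewrite hrelAB; apply: gcommuten; exact: gcommute_refl.
  rewrite -[A]gpowz1 -euv gpowzD (GRing.mulrC u) (GRing.mulrC v) (gpowzM A _ u) (gpowzM A _ v) -/U gpowz_nat.
  by apply: gcommuteM; apply: gcommute_powz.
have [eA eB] := abel_calc hbez hAB hrelAB.
set X := gmul (gpowz A q1) (gpowz B p1) in eA eB.
have hX : gpown X r = gone by rewrite /X powz_mul_comm // -exr.
have hNa : N ar.
  apply/(qproj_eq1 hN); change (pi ar = gone).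
  by rewrite /ar (homn hpi) -/A -eA -gpownM mulnC gpownM hX gpown_one.
have hNb : N br.
  apply/(qproj_eq1 hN); change (pi br = gone).
  by rewrite /br (homn hpi) -/B -eB -gpownM mulnC gpownM hX gpown_one.
move: t; apply: ggen_min; first exact: ggen_subgroup.
by move=> z [->|->].
Qed.

End R.

Definition gen_of (bl : bool) := if bl then a else b.
Fixpoint sw (w : seq (bool * nat)) : T :=
  if w is l :: t then gpown (gen_of l.1) l.2 ** sw t else one.

Lemma gen_md bl : gpown (gen_of bl) (md p q bl) = cc.
Proof. by case: bl => //=; rewrite /cc hrel. Qed.

Lemma sw_act bl w : reduced p q w ->
  exists d : nat, gen_of bl ** sw w = sw (act p q bl w) ** gpown cc d.
Proof.
case: w => [|[bl' e] t] hw.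
  by exists 0; rewrite /= !mulg1'.
rewrite [act _ _ _ _]/=.
case: eqP => [ebl|nbl].
  subst bl'; case: eqP => [em|nem].
    exists 1; rewrite [sw (_ :: _)]/= mulgA' -gpownS em gen_md gpown1.
    exact: cc_central.
  by exists 0; rewrite /= mulgA' -gpownS mulg1'.
by exists 0; rewrite /= !mulg1'.
Qed.

Definition Dset (y : T) := exists w k, reduced p q w /\ y = sw w ** gpowz cc k.

Lemma D_gen bl y : Dset y -> Dset (gen_of bl ** y).
Proof.
case=> w [k [hw ->]]; case: (sw_act bl hw) => d ed.
exists (act p q bl w), (Posz d + k)%R; split; first exact: act_red.
by rewrite mulgA' ed gpowzD -mulgA'.
Qed.
Lemma D_ccinv y : Dset y -> Dset (inv cc ** y).
Proof.
case=> w [k [hw ->]]; exists w, (-1 + k)%R; split => //.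
rewrite gpowzD mulgA' (ZcV cc_central (sw w)) -mulgA'; congr gmul.
by rewrite gpowzN gpowz1.
Qed.
Lemma D_pown bl n y : Dset y -> Dset (gpown (gen_of bl) n ** y).
Proof.
move=> hy; elim: n => [|n IH]; first by rewrite mul1g'.
by rewrite gpownS -mulgA'; exact: D_gen.
Qed.
Lemma gen_inv bl : inv (gen_of bl) = gpown (gen_of bl) (md p q bl).-1 ** inv cc.
Proof.
apply: inv_eq; rewrite mulgA' -gpownS prednK; last by rewrite (ltn_trans _ (md_gt1 hp hq bl)).
by rewrite gen_md mulgV'.
Qed.
Lemma D_all x : Dset x.
Proof.
have h : forall x, forall y, Dset y -> Dset (x ** y) /\ Dset (inv x ** y).
  apply: gen.
  - split.
    + by move=> y hy; rewrite inv1 mul1g'.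
    + move=> x1 x2 h1 h2 y hy; split.
        by rewrite -mulgA'; apply: (proj1 (h1 _ _)); exact: (proj1 (h2 _ hy)).
      rewrite invMg -mulgA'; apply: (proj2 (h2 _ _)); exact: (proj2 (h1 _ hy)).
    + by move=> x1 h1 y hy; rewrite invgK; split; [exact: (proj2 (h1 _ hy)) | exact: (proj1 (h1 _ hy))].
  - move=> y hy; split; first exact: (D_gen true).
    rewrite (gen_inv true) -mulgA'; apply: D_pown; exact: D_ccinv.
  - move=> y hy; split; first exact: (D_gen false).
    rewrite (gen_inv false) -mulgA'; apply: D_pown; exact: D_ccinv.
rewrite -(mulg1' x); apply: (proj1 (h x one _)).
by exists [::], 0%R; split => //; rewrite /= mulg1'.
Qed.

Lemma center_cc z : Zc z -> exists k : int, z = gpowz cc k.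
Proof.
move=> hz; case: (D_all z) => w [k [hw ez]].
suff w0 : w = [::] by exists k; rewrite ez w0 /= mul1g'.
have hzw : Zc (sw w).
  have -> : sw w = z ** inv (gpowz cc k) by rewrite ez mulgK'.
  exact: (ZcM hz (ZcV (Zc_powz k cc_central))).
have hAB : gpown (Ab hp hq true) p = gpown (Ab hp hq false) q.
  by rewrite (Ab_md hp hq true) (Ab_md hp hq false).
case: (univ hAB) => rho [hrho ra rb].
have rg : forall bl, rho (gen_of bl) = Ab hp hq bl by case.
have rho_s : forall w (v : W p q), reduced p q (w ++ val v) ->
    val (pf (rho (sw w)) v) = w ++ val v.
  elim => [|[bl e] w' IH] v hv.
    by rewrite /= (hom1 hrho).
  move: hv; rewrite /= => /and3P [/andP [he hem] hst hr].
  rewrite hrho [pf _ _]/= (homn hrho) rg PermG_pown.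
  have -> : iter e (pf (Ab hp hq bl)) (pf (rho (sw w')) v) = iter e (actW hp hq bl) (pf (rho (sw w')) v) by [].
  rewrite iter_actW IH //.
  have := @iter_act_mk _ _ hp hq bl 0 (w' ++ val v) e (ltn_trans (isT : 0 < 1) (md_gt1 hp hq bl)) hst.
  by rewrite /= add0n modn_small // => ->; case: e he {hem}.
case/lastP: w hw ez hzw rho_s => [//|w0 l] hw ez hzw rho_s.
pose bl := ~~ l.1.
have nb : l.1 != bl by rewrite /bl; case: (l.1).
have hred := reduced_rcons hp hq hw nb.
have hcomm : gmul (rho (sw (rcons w0 l))) (Ab hp hq bl) = gmul (Ab hp hq bl) (rho (sw (rcons w0 l))).
  by rewrite -rg -!hrho (hzw (gen_of bl)).
pose eps : W p q := exist _ [::] (isT : reduced p q [::]).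
have := congr1 (fun s => val (pf s eps)) hcomm.
rewrite /=.
have e1 : val (pf (rho (sw (rcons w0 l))) (actW hp hq bl eps)) = rcons w0 l ++ [:: (bl, 1)].
  by apply: rho_s; rewrite /= cats1.
have e2 : val (pf (rho (sw (rcons w0 l))) eps) = rcons w0 l ++ [::] by apply: rho_s; rewrite cats0.
move=> e3.
have : act p q bl (rcons w0 l) = rcons w0 l ++ [:: (bl, 1)].
  have e4 : val (actW hp hq bl (pf (rho (sw (rcons w0 l))) eps)) = act p q bl (rcons w0 l).
    by rewrite /= e2 cats0.
  rewrite -e4 -e1; exact: esym e3.
move=> h; exfalso; move: h; apply/eqP; apply: act_neq_snoc.
by rewrite -size_eq0 size_rcons.
Qed.


Lemma Gr1_all t : Gr 1 t.
Proof.
move: t; apply: gen; first exact: Gr_sub.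
  by apply: ggen_in; left; rewrite /ar gpown1.
by apply: ggen_in; right; rewrite /br gpown1.
Qed.

Lemma ncl_Gr r (hr : 1 <= r) (hrp : coprime r p) (hrq : coprime r q) t :
  gnormal_closure (Gr r) (xr r) t <-> Gr r t.
Proof.
split.
  move: t; apply: ggen_min; first exact: Gr_sub.
  by move=> z [g [hg ->]]; exact: (gconj_in (Gr_sub r) (@xr_in r) hg).
case: (f_spec hr hrp hrq) => f [hf fa fb _ img] /img [s <-].
have hs : gnormal_closure (gsetT T) (xr 1) s.
  by apply/(ncl_T (r:=1)) => //; [exact: coprime1n | exact: coprime1n | exact: Gr1_all].
have fx : f (xr 1) = xr r by rewrite /xr /ar /br !gpown1 hf !(homz hf) fa fb.
move: hs; apply: (hom_ggen hf) => z [g [_ ->]].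
exists (f g); split; first by apply/img; exists g.
by rewrite (hom_conj hf) fx.
Qed.

Lemma center_eq r (hr : 1 <= r) (hrp : coprime r p) (hrq : coprime r q) t :
  gcenter (Gr r) t <-> ggen (fun z => z = gpown cc r) t.
Proof.
have hccr : Gr r (gpown cc r).
  by rewrite /cc -gpownM mulnC gpownM; apply: sgn (Gr_sub r) _; exact: Gr_ar.
split; last first.
  move: t; apply: ggen_min; first exact: gcenter_subgroup (Gr_sub r).
  move=> z ->; split => // y _; exact: (Zc_pown _ cc_central y).
move=> hz.
case: (center_cc (center_Gr_central hr hrp hrq hz)) => k ek.
case: hz => hz _.
have r0 : (Posz r != 0)%R by rewrite eqz_nat -lt0n.
have [n en] : exists n : nat, (k %% Posz r)%Z = Posz n.
  move: (modz_ge0 k r0); case: (k %% Posz r)%Z => // n _; by exists n.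
have hn : n < r.
  have r0' : (0 < Posz r)%R by rewrite ltz_nat.
  have := ltz_pmod k r0'.
  by rewrite en ltz_nat.
set l := (k %/ Posz r)%Z.
have ek2 : t = gmul (gpowz (gpown cc r) l) (gpown cc n).
  by rewrite ek {1}(divz_eq k r) en gpowzD -gpowz_nat -gpowzM GRing.mulrC.
have hGn : Gr r (gpown cc n).
  apply: (sgMl (Gr_sub r) (x := gpowz (gpown cc r) l)); last by rewrite -ek2.
  exact: sgz (Gr_sub r) hccr.
case: (psi_spec hr hrp hrq) => psi [hpsi ker val].
have hn' : n < (r.-1).+1 by rewrite prednK.
have := val (Ordinal hn'); rewrite /= (proj2 (ker _) hGn) => e.
have n0 : n = 0 by move: (congr1 (@nat_of_ord _) e).
rewrite ek2 n0 /= mulg1'.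
exact: (sgz _ (@ggen_subgroup _ (fun z => z = gpown cc r)) (ggen_in erefl)).
Qed.

End Main.

Unset Implicit Arguments.

Theorem mainTheorem18 (p q r : nat) (p1 q1 : int)
    (T : group) (a b : T)
    (hp : 2 <= p) (hq : 2 <= q) (hpq : coprime p q)
    (hr : 1 <= r) (hrp : coprime r p) (hrq : coprime r q)
    (hpres : torus_presentation p q a b)
    (hbez : (p%:Z * p1 + q%:Z * q1 = 1)%R) :
  let c := gpown a p in
  let ar := gpown a r in
  let br := gpown b r in
  let Gr := ggen (fun z => z = ar \/ z = br) in
  let xr := gmul (gpowz ar q1) (gpowz br p1) in
  (* alpha |-> alpha_r, beta |-> beta_r is an isomorphism T -> G_r *)
  (exists f : T -> T,
     [/\ is_hom f, f a = ar, f b = br,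
         (forall x y, f x = f y -> x = y)
       & (forall y, Gr y <-> exists x, f x = y)]) /\
  (* (i) *)
  (gsame_set (gcenter Gr) (ggen (fun z => z = gpown c r))
   /\ gsubset (gcenter Gr) (gcenter (gsetT T))) /\
  (* (ii) *)
  gsame_set (gderived Gr) (gderived (gsetT T)) /\
  (* (iii) *)
  ((forall y, Gr y -> exists k : int, gderived Gr (gmul y (ginv (gpowz xr k))))
   /\ gsame_set (gnormal_closure (gsetT T) xr) Gr
   /\ gsame_set (gnormal_closure Gr xr) Gr) /\
  (* (iv) *)
  (gnormal Gr (gsetT T)
   /\ quotient_iso (gsetT T) Gr (Zr_group r)
   /\ quotient2_iso (gsetT T) (gderived (gsetT T)) Gr (Zr_group r)
   /\ quotient_iso (gcenter (gsetT T)) (gcenter Gr) (Zr_group r)) /\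
  (* (v) the projection T -> T / Z(T) maps G_r onto T / Z(T) *)
  (forall x : T, exists y, Gr y /\ gcenter (gsetT T) (gmul x (ginv y))).
Proof.
move=> c ar0 br0 Gr0 xr0.
have Zc_center : forall z : T, Zc z -> gcenter (gsetT T) z.
  by move=> z hz; split => // y _; exact: hz.
case: (psi_spec hp hq hpres hr hrp hrq) => psi [hpsi ker val].
split; first exact: (f_spec hp hq hpres hr hrp hrq).
split.
  split; first exact: (center_eq hp hq hpres hr hrp hrq).
  move=> z hz; apply: Zc_center; exact: (center_Gr_central hpres hr hrp hrq hz).
split; first exact: (derived_eq hpres hr hrp hrq).
split.
  split; first by move=> y hy; exact: (iii1 hp hq hpres hbez hr hrp hrq hy).
  split; first exact: (ncl_T hpres hbez hr hrp hrq).
  exact: (ncl_Gr hp hq hpres hbez hr hrp hrq).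
split; last first.
  move=> x; case: (decomp hpres hr hrp hrq x) => y [hy hz]; exists y; split => //.
  exact: Zc_center.
split.
  split; [exact: Gr_sub | by [] | move=> x g hx _; exact: (Gr_normal hpres hr hrp hrq g hx)].
split.
  exists psi; split; [by move=> x y _ _; exact: hpsi | | by move=> x _; exact: ker].
  by move=> k; exists (gpown (cc p a) k); split.
split.
  exists psi; split; [by move=> x y _ _; exact: hpsi | | ].
    by move=> k; exists (gpown (cc p a) k); split.
  move=> x _; rewrite ker; split.
    by move=> hx; exists x; split => //; rewrite mulgV'; exact: sg1 (ggen_subgroup _).
  case=> y [hy hd]; rewrite -(mulgVK' x y).
  exact: (sgM (@Gr_sub _ a b r) (derivedT_Gr hpres hr hrp hrq hd) hy).
exists psi; split; [by move=> x y _ _; exact: hpsi | | ].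
  move=> k; exists (gpown (cc p a) k); split => //.
  apply: Zc_center; apply: Zc_pown; exact: (cc_central hpres).
move=> x [_ hx]; rewrite ker; split.
  move=> hGx; split => // y _; exact: hx.
by case.
Qed.
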